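(* The system $(X,\hat T)$ has zero topological entropy.
   Context: Let $\tau:\mathbb N\to(0,\infty)$ be non-increasing with $\tau(n)\to0$. Fix integers $2\le q_1<q_2<\cdots$ such that for every $k\ge1$: (i) $q_{k+1}>q_k^4+3q_k$; (ii) $\tau(\lceil q_{k+1}/3\rceil)<\frac1{16q_k}$. For $k\ge1$ put $q^{(0)}_k=q_{2k}$, $q^{(1)}_k=q_{2k+1}$, $q^{(2)}_k=q^{(0)}_k-1$, $q^{(3)}_k=q^{(1)}_k-1$, and $L^{(i)}_k=\lfloor q^{(i)}_{k+1}/(3q^{(i)}_k)\rfloor$. Let $s^{(i)}_k\in\{-1,0,1\}^{\mathbb N}$ (indices $n\ge1$) be given by $s^{(i)}_k(n)=1$ if $n=jq^{(i)}_k$ with $1\le j\le L^{(i)}_k$, $s^{(i)}_k(n)=-1$ if $n=jq^{(i)}_k$ with $L^{(i)}_k<j\le2L^{(i)}_k$, and $s^{(i)}_k(n)=0$ otherwise. For $w\in\{-1,0,1\}^{\mathbb N}$ and $p\in\mathbb N_0$ let $\sigma^{-p}w$ be defined by $(\sigma^{-p}w)(n)=0$ for $1\le n\le p$ and $(\sigma^{-p}w)(n)=w(n-p)$ for $n>p$. For $l\le m$ write $w|_l^m=(w_l,\dots,w_m)$. Let $R^{(i)}_k=\{(\sigma^{-p}s^{(i)}_k)|_{q^{(i)}_k}^{q^{(i)}_{k+1}-1}:p=0,1,\dots,q^{(i)}_k\}$ and $P^{(i)}=\{y\in\{-1,0,1\}^{\mathbb N}: y(n)=0\text{ for }1\le n<q^{(i)}_1,\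 y|_{q^{(i)}_k}^{q^{(i)}_{k+1}-1}\in R^{(i)}_k\text{ for all }k\ge1\}$. Let $Z=\{-1,0,1\}^{\mathbb N}\times\{-1,0,1\}^{\mathbb Z}$, where each factor carries the metric $d(u,v)=3^{-\min\{|m|:u_m\neq v_m\}}$ and $Z$ the maximum of the two. $\sigma$ is the left shift $(\sigma u)_m=u_{m+1}$ (invertible on $\{-1,0,1\}^{\mathbb Z}$). Define $T:Z\to Z$, $T(y,z)=(\sigma y,\sigma^{y_1}z)$, and $X_i=\overline{\bigcup_{n\ge0}T^n(P^{(i)}\times\{-1,0,1\}^{\mathbb Z})}$ for $i\in\{0,1,2,3\}$. Let $X=X_0\times X_1\times X_2\times X_3\times\{0,1,2,3\}$ with $\hat T(p^{(0)},p^{(1)},p^{(2)},p^{(3)},i)=(Tp^{(0)},Tp^{(1)},Tp^{(2)},Tp^{(3)},i)$. *)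

(* Defs.v *)
From Stdlib Require Import Reals Lra Lia ZArith Arith List.
From Coquelicot Require Import Coquelicot.
Open Scope R_scope.

(* Encoding conventions.
   * A one-sided sequence u in {-1,0,1}^N (indices n >= 1) is encoded as
     u : nat -> Z with  u k  standing for  u_(k+1).  Helper [yat u n] = u_n.
   * A two-sided sequence z in {-1,0,1}^Z is z : Z -> Z.
   * Auxiliary words (s_k^(i), sigma^{-p} w) are functions nat -> Z used
     only at indices n >= 1 (value at 0 irrelevant).                      *)

Definition seqN := nat -> Z.
Definition seqZ := Z -> Z.
Definition Pt := (seqN * seqZ)%type.

Definition yat (u : seqN) (n : nat) : Z := u (n - 1)%nat.

Definition sym (a : Z) : Prop := a = (-1)%Z \/ a = 0%Z \/ a = 1%Z.

Definition inSpace (p : Pt) : Prop :=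
  (forall k, sym (fst p k)) /\ (forall m, sym (snd p m)).

(* metric d(u,v) = 3^{-min{|m| : u_m <> v_m}} (0 if u = v); the min is the
   sup of the set {3^{-|m|} : u_m <> v_m}; [real] of the empty sup is 0. *)
Definition dN (u v : seqN) : R :=
  real (Lub_Rbar (fun r => exists k : nat, u k <> v k /\ r = (/ 3) ^ (S k))).
Definition dZ (u v : seqZ) : R :=
  real (Lub_Rbar (fun r => exists m : Z, u m <> v m /\ r = (/ 3) ^ (Z.abs_nat m))).
Definition dPt (p p' : Pt) : R := Rmax (dN (fst p) (fst p')) (dZ (snd p) (snd p')).

(* T(y,z) = (sigma y, sigma^{y_1} z), (sigma^a z)_m = z_(m+a). *)
Definition Tmap (p : Pt) : Pt :=
  (fun k => fst p (S k), fun m => snd p (m + fst p 0%nat)%Z).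

Definition qi (q : nat -> nat) (i k : nat) : nat :=
  match i with
  | 0 => q (2 * k)%nat
  | 1 => q (2 * k + 1)%nat
  | 2 => (q (2 * k)%nat - 1)%nat
  | _ => (q (2 * k + 1)%nat - 1)%nat
  end.

Definition Li (q : nat -> nat) (i k : nat) : nat :=
  (qi q i (k + 1) / (3 * qi q i k))%nat.

Definition sword (qk L : nat) (n : nat) : Z :=
  if Nat.eqb (n mod qk) 0 then
    let j := (n / qk)%nat in
    if andb (Nat.leb 1 j) (Nat.leb j L) then 1%Z
    else if andb (Nat.ltb L j) (Nat.leb j (2 * L)) then (-1)%Z
    else 0%Z
  else 0%Z.

Definition shiftR (p : nat) (w : nat -> Z) (n : nat) : Z :=
  if Nat.leb n p then 0%Z else w (n - p)%nat.

Definition inR (q : nat -> nat) (i k : nat) (y : seqN) : Prop :=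
  exists p : nat, (p <= qi q i k)%nat /\
    forall n : nat, (qi q i k <= n <= qi q i (k + 1) - 1)%nat ->
      yat y n = shiftR p (sword (qi q i k) (Li q i k)) n.

Definition Pset (q : nat -> nat) (i : nat) (y : seqN) : Prop :=
  (forall k, sym (y k)) /\
  (forall n : nat, (1 <= n < qi q i 1)%nat -> yat y n = 0%Z) /\
  (forall k : nat, (1 <= k)%nat -> inR q i k y).

(* X_i = closure in Z of the union of T^n(P^(i) x {-1,0,1}^Z) *)
Definition Xi (q : nat -> nat) (i : nat) (x : Pt) : Prop :=
  inSpace x /\
  forall eps : R, 0 < eps ->
    exists (p : Pt) (n : nat),
      Pset q i (fst p) /\ (forall m, sym (snd p m)) /\
      dPt x (Nat.iter n Tmap p) < eps.

Definition St := (Pt * Pt * Pt * Pt * nat)%type.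

Definition Xset (q : nat -> nat) (s : St) : Prop :=
  match s with
  | (p0, p1, p2, p3, i) =>
      Xi q 0 p0 /\ Xi q 1 p1 /\ Xi q 2 p2 /\ Xi q 3 p3 /\ (i < 4)%nat
  end.

Definition That (s : St) : St :=
  match s with
  | (p0, p1, p2, p3, i) => (Tmap p0, Tmap p1, Tmap p2, Tmap p3, i)
  end.

Definition dSt (s s' : St) : R :=
  match s, s' with
  | (p0, p1, p2, p3, i), (p0', p1', p2', p3', i') =>
      Rmax (Rmax (Rmax (dPt p0 p0') (dPt p1 p1')) (Rmax (dPt p2 p2') (dPt p3 p3')))
           (if Nat.eqb i i' then 0 else 1)
  end.

(* For a map T on a metric space (S,d) and an invariant set X:
   E is (n,eps)-separated if for x <> y in E, max_{0<=j<n} d(T^j x,T^j y) > eps;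
   s(n,eps) = sup of #E over finite (n,eps)-separated E subset X;
   h(T) = lim_{eps->0} limsup_n (1/n) log s(n,eps).
   Since s(n,eps) >= 1 when X is nonempty and the limsup is monotone in eps,
   h(T) = 0 holds iff for every eps>0 and delta>0, for all large n every
   finite (n,eps)-separated subset of X has at most exp(delta n) points.
   [zero_topological_entropy] is this literal unfolding of h(T) = 0. *)
Definition separated {S : Type} (d : S -> S -> R) (T : S -> S)
    (n : nat) (eps : R) (x y : S) : Prop :=
  exists j : nat, (j < n)%nat /\ d (Nat.iter j T x) (Nat.iter j T y) > eps.

Definition separated_set {S : Type} (X : S -> Prop) (d : S -> S -> R) (T : S -> S)
    (n : nat) (eps : R) (E : list S) : Prop :=
  NoDup E /\ (forall x, In x E -> X x) /\
  (forall x y, In x E -> In y E -> x <> y -> separated d T n eps x y).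

Definition zero_topological_entropy {S : Type} (X : S -> Prop)
    (d : S -> S -> R) (T : S -> S) : Prop :=
  forall eps delta : R, 0 < eps -> 0 < delta ->
    exists N : nat, forall n : nat, (N <= n)%nat ->
      forall E : list S, separated_set X d T n eps E ->
        INR (length E) <= exp (delta * INR n).

(* Main.v *)
Require Import Defs.
From Stdlib Require Import Reals Arith ZArith.
Open Scope R_scope.
From Stdlib Require Import Lia Lra List Classical.
From Coquelicot Require Import Coquelicot.

Module M1.
Open Scope R_scope.

Lemma third_pow_pos n : 0 < (/3)^n.
Proof. apply pow_lt; lra. Qed.

Lemma third_pow_le (m n : nat) : (n <= m)%nat -> (/3)^m <= (/3)^n.
Proof.
  intros H. replace m with (n + (m - n))%nat by lia. rewrite pow_add.
  assert (0 <= (/3)^(m-n) <= 1).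
  { split. apply pow_le; lra. destruct (m - n)%nat eqn:E. simpl; lra.
    left. apply pow_lt_1_compat; [lra|lia]. }
  pose proof (third_pow_pos n). nra.
Qed.

Lemma lub_upper (E : R -> Prop) (b : R) : 0 <= b -> (forall r, E r -> r <= b) ->
  real (Lub_Rbar E) <= b.
Proof.
  intros Hb H. destruct (Lub_Rbar_correct E) as [Hub Hl].
  assert (Rbar_le (Lub_Rbar E) b). { apply Hl. intros x Hx. simpl. now apply H. }
  destruct (Lub_Rbar E); simpl in *; try lra; tauto.
Qed.

Lemma lub_lower (E : R -> Prop) (b r : R) : (forall r, E r -> r <= b) -> E r ->
  r <= real (Lub_Rbar E).
Proof.
  intros H Hr. destruct (Lub_Rbar_correct E) as [Hub Hl].
  assert (Rbar_le (Lub_Rbar E) b). { apply Hl. intros x Hx. simpl. now apply H. }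
  specialize (Hub r Hr).
  destruct (Lub_Rbar E); simpl in *; try lra; tauto.
Qed.

Lemma dN_upper (u v : seqN) (M : nat) : (forall k, (k < M)%nat -> u k = v k) ->
  dN u v <= (/3)^(S M).
Proof.
  intros H. unfold dN. apply lub_upper. left; apply third_pow_pos.
  intros r [k [Hk ->]]. apply third_pow_le.
  destruct (Nat.lt_ge_cases k M). exfalso; apply Hk; auto. lia.
Qed.

Lemma dZ_upper (u v : seqZ) (M : nat) : (forall m, (Z.abs_nat m <= M)%nat -> u m = v m) ->
  dZ u v <= (/3)^(S M).
Proof.
  intros H. unfold dZ. apply lub_upper. left; apply third_pow_pos.
  intros r [k [Hk ->]]. apply third_pow_le.
  destruct (Nat.le_gt_cases (Z.abs_nat k) M). exfalso; apply Hk; auto. lia.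
Qed.

Lemma dN_lower (u v : seqN) (k : nat) : u k <> v k -> (/3)^(S k) <= dN u v.
Proof.
  intros H. unfold dN. apply lub_lower with (b := 1).
  - intros r [k' [_ ->]]. left. apply pow_lt_1_compat; [lra|lia].
  - exists k; auto.
Qed.

Lemma dN_agree (u v : seqN) (N : nat) : dN u v < (/3)^N -> forall k, (k < N)%nat -> u k = v k.
Proof.
  intros H k Hk. destruct (Z.eq_dec (u k) (v k)) as [e|ne]; auto.
  pose proof (dN_lower u v k ne). pose proof (third_pow_le N (S k) Hk). lra.
Qed.

End M1.
Import M1.

Module M2.
Open Scope R_scope.

Fixpoint Csum (y : seqN) (b : nat) : Z :=
  match b with O => 0%Z | S b' => (Csum y b' + y b')%Z end.

Lemma iter_T_fst (x : Pt) (j k : nat) : fst (Nat.iter j Tmap x) k = fst x (k + j)%nat.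
Proof.
  revert k. induction j; intros k; simpl. f_equal; lia.
  rewrite IHj. f_equal; lia.
Qed.

Lemma iter_T_snd (x : Pt) (j : nat) (m : Z) :
  snd (Nat.iter j Tmap x) m = snd x (m + Csum (fst x) j)%Z.
Proof.
  revert m. induction j; intros m; simpl. f_equal; lia.
  rewrite IHj. rewrite iter_T_fst. simpl. f_equal; lia.
Qed.

Lemma iter_That (p0 p1 p2 p3 : Pt) (i j : nat) :
  Nat.iter j That (p0, p1, p2, p3, i) =
  (Nat.iter j Tmap p0, Nat.iter j Tmap p1, Nat.iter j Tmap p2, Nat.iter j Tmap p3, i).
Proof. induction j; simpl; auto. rewrite IHj. reflexivity. Qed.

End M2.
Import M2.

Module M3.
Open Scope nat_scope.

Ltac bdestr := repeat match goal with
  | |- context [?a <=? ?b] => destruct (Nat.leb_spec a b)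
  | |- context [?a <? ?b] => destruct (Nat.ltb_spec a b)
  | |- context [?a =? ?b] => destruct (Nat.eqb_spec a b)
  | |- context [(?a && ?b)%bool] => progress simpl
  end.

Definition tent (L u : nat) : Z :=
  if u <=? L then Z.of_nat u else if u <=? 2 * L then Z.of_nat (2 * L - u) else 0%Z.

Lemma div_pred_mult (e q : nat) : 1 <= q -> 1 <= e -> e mod q = 0 ->
  (e - 1) / q = e / q - 1 /\ 1 <= e / q.
Proof.
  intros Hq He Hm. pose proof (Nat.div_mod e q ltac:(lia)) as D. rewrite Hm in D.
  assert (1 <= e / q). { destruct (e / q); lia. }
  split; auto. symmetry. apply (Nat.div_unique _ _ _ (q - 1)). lia.
  rewrite D at 1. nia.
Qed.

Lemma div_pred_nmult (e q : nat) : 1 <= q -> e mod q <> 0 -> (e - 1) / q = e / q.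
Proof.
  intros Hq Hm. pose proof (Nat.div_mod e q ltac:(lia)) as D.
  pose proof (Nat.mod_upper_bound e q ltac:(lia)).
  symmetry. apply (Nat.div_unique _ _ _ (e mod q - 1)). lia. lia.
Qed.

Lemma tent_step (q L p b : nat) : 1 <= q -> 1 <= b ->
  tent L ((b - p) / q) = (tent L ((b - 1 - p) / q) + shiftR p (sword q L) b)%Z.
Proof.
  intros Hq Hb. unfold shiftR. destruct (Nat.leb_spec b p).
  - replace (b - p) with 0 by lia. replace (b - 1 - p) with 0 by lia. lia.
  - replace (b - 1 - p) with ((b - p) - 1) by lia. unfold sword.
    set (e := b - p). assert (1 <= e) by (unfold e; lia).
    destruct (Nat.eqb_spec (e mod q) 0) as [Hm|Hm].
    + destruct (div_pred_mult e q Hq H0 Hm) as [E1 E2]. rewrite E1.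
      set (u := e / q) in *. unfold tent. bdestr; lia.
    + rewrite (div_pred_nmult e q Hq Hm). lia.
Qed.

Definition QL (Q : nat -> nat) (k : nat) : nat := Q (k + 1) / (3 * Q k).
Definition fblk (Q : nat -> nat) (p k b : nat) : Z := shiftR p (sword (Q k) (QL Q k)) b.

Definition Qgood (Q : nat -> nat) : Prop :=
  (forall k, 1 <= k -> 1 <= Q k) /\ (forall k, 1 <= k -> 3 * Q k + 3 <= Q (k + 1)).

Lemma blockfact Q k : Qgood Q -> 1 <= k -> 2 * (QL Q k * Q k) + Q k + 1 <= Q (k + 1).
Proof.
  intros [H1 H2] Hk. specialize (H1 k Hk). specialize (H2 k Hk). unfold QL.
  pose proof (Nat.Div0.mul_div_le (Q (k+1)) (3 * Q k)).
  set (L := Q (k + 1) / (3 * Q k)) in *. lia.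
Qed.

Lemma fblk_support Q p k b : Qgood Q -> 1 <= k -> p <= Q k -> fblk Q p k b <> 0%Z ->
  Q k <= b <= Q (k + 1) - 1.
Proof.
  intros HG Hk Hp Hne. pose proof (blockfact Q k HG Hk) as BF.
  destruct HG as [H1 _]. specialize (H1 k Hk).
  unfold fblk, shiftR, sword in Hne. revert Hne. set (L := QL Q k) in *.
  destruct (Nat.leb_spec b p); [congruence|].
  destruct (Nat.eqb_spec ((b - p) mod Q k) 0) as [Hm|Hm]; [|congruence].
  pose proof (Nat.div_mod (b - p) (Q k) ltac:(lia)) as D. rewrite Hm in D.
  set (j := (b - p) / Q k) in *.
  bdestr; try congruence; intros _; nia.
Qed.

End M3.
Import M3.

Module M4.
Open Scope nat_scope.

Definition GP (Q : nat -> nat) (y : seqN) : Prop :=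
  (forall n, 1 <= n < Q 1 -> yat y n = 0%Z) /\
  (forall k, 1 <= k -> exists p, p <= Q k /\
     forall n, Q k <= n <= Q (k + 1) - 1 -> yat y n = fblk Q p k n).

Lemma Csum_S y b : Csum y (S b) = (Csum y b + yat y (S b))%Z.
Proof. simpl. unfold yat. replace (S b - 1) with b by lia. reflexivity. Qed.

Lemma Qmono Q k k' : Qgood Q -> 1 <= k -> k <= k' -> Q k <= Q k'.
Proof.
  intros [H1 H2] Hk Hkk. induction Hkk; auto. specialize (H2 m ltac:(lia)).
  replace (S m) with (m + 1) by lia. lia.
Qed.

Lemma Qge Q k : Qgood Q -> 1 <= k -> k <= Q k.
Proof.
  intros [H1 H2] Hk. induction Hk. auto. specialize (H2 m ltac:(lia)).
  replace (S m) with (m + 1) by lia. lia.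
Qed.

Lemma Qstrict Q k k' : Qgood Q -> 1 <= k -> k < k' -> Q k < Q k'.
Proof.
  intros HG Hk Hkk. pose proof (Qmono Q (k+1) k' HG ltac:(lia) ltac:(lia)).
  destruct HG as [H1 H2]. specialize (H2 k Hk). lia.
Qed.

Lemma zero_start Q y : GP Q y -> forall b, b <= Q 1 - 1 -> Csum y b = 0%Z.
Proof.
  intros [Hz _] b. induction b; intros Hb. reflexivity.
  rewrite Csum_S, IHb by lia. rewrite Hz by lia. reflexivity.
Qed.

Lemma inner Q y k p : Qgood Q -> 1 <= k -> p <= Q k ->
  (forall n, Q k <= n <= Q (k + 1) - 1 -> yat y n = fblk Q p k n) ->
  Csum y (Q k - 1) = 0%Z ->
  forall d, Q k - 1 + d <= Q (k + 1) - 1 ->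
    Csum y (Q k - 1 + d) = tent (QL Q k) ((Q k - 1 + d - p) / Q k).
Proof.
  intros HG Hk Hp Hf H0 d. pose proof (proj1 HG k Hk) as Hq.
  induction d; intros Hd.
  - rewrite Nat.add_0_r, H0. rewrite Nat.div_small by lia. reflexivity.
  - replace (Q k - 1 + S d) with (S (Q k - 1 + d)) by lia.
    rewrite Csum_S, IHd by lia. rewrite Hf by lia. unfold fblk.
    rewrite (tent_step (Q k) (QL Q k) p (S (Q k - 1 + d))) by lia.
    replace (S (Q k - 1 + d) - 1) with (Q k - 1 + d) by lia. reflexivity.
Qed.

Lemma block_end_zero Q y : Qgood Q -> GP Q y -> forall k, 1 <= k -> Csum y (Q k - 1) = 0%Z.
Proof.
  intros HG HP k Hk. induction Hk.
  - apply (zero_start Q y HP). lia.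
  - destruct (proj2 HP m Hk) as [p [Hp Hf]].
    pose proof (proj1 HG m Hk) as Hq. pose proof (proj2 HG m Hk) as Hq2.
    pose proof (inner Q y m p HG Hk Hp Hf IHHk (Q (m+1) - Q m)) as E.
    replace (S m) with (m + 1) by lia.
    replace (Q m - 1 + (Q (m + 1) - Q m)) with (Q (m+1) - 1) in E by lia.
    rewrite E by lia.
    pose proof (blockfact Q m HG Hk) as BF.
    assert (2 * QL Q m <= (Q (m + 1) - 1 - p) / Q m).
    { apply Nat.div_le_lower_bound. lia. nia. }
    unfold tent. set (u := (Q (m + 1) - 1 - p) / Q m) in *. set (L := QL Q m) in *.
    bdestr; lia.
Qed.

Lemma Csum_block Q y k p b : Qgood Q -> GP Q y -> 1 <= k -> p <= Q k ->
  (forall n, Q k <= n <= Q (k + 1) - 1 -> yat y n = fblk Q p k n) ->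
  Q k - 1 <= b <= Q (k + 1) - 1 ->
  Csum y b = tent (QL Q k) ((b - p) / Q k).
Proof.
  intros HG HP Hk Hp Hf Hb.
  pose proof (inner Q y k p HG Hk Hp Hf (block_end_zero Q y HG HP k Hk) (b - (Q k - 1))).
  replace (Q k - 1 + (b - (Q k - 1))) with b in H by lia. apply H. lia.
Qed.

End M4.
Import M4.

Module M5.
Open Scope nat_scope.

Lemma locate Q b : Qgood Q -> Q 1 <= b -> exists k, 1 <= k /\ Q k <= b <= Q (k + 1) - 1.
Proof.
  intros HG Hb.
  assert (forall K, b < Q (S K) -> exists k, 1 <= k /\ Q k <= b <= Q (k + 1) - 1).
  { induction K; intros HK. lia.
    destruct (Nat.lt_ge_cases b (Q (S K))). auto.
    exists (S K). split. lia. replace (S K + 1) with (S (S K)) by lia. lia. }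
  apply (H b). pose proof (Qge Q (S b) HG ltac:(lia)). lia.
Qed.

Lemma tent_bounds L u : (0 <= tent L u <= Z.of_nat L)%Z /\ (tent L u <= Z.of_nat u)%Z.
Proof. unfold tent. bdestr; lia. Qed.

Lemma tent_lip L u u' : u <= u' -> (Z.abs (tent L u' - tent L u) <= Z.of_nat (u' - u))%Z.
Proof. intros. unfold tent. bdestr; lia. Qed.

Lemma tent_tail L u : (tent L u <= Z.of_nat (2 * L - u))%Z.
Proof. unfold tent. bdestr; lia. Qed.

Lemma div_add_le (x j q : nat) : 1 <= q -> (x + j) / q <= x / q + j / q + 1.
Proof.
  intros Hq. pose proof (Nat.div_mod x q ltac:(lia)). pose proof (Nat.div_mod j q ltac:(lia)).
  pose proof (Nat.mod_upper_bound x q ltac:(lia)). pose proof (Nat.mod_upper_bound j q ltac:(lia)).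
  assert ((x + j) / q < x / q + j / q + 2); [|lia].
  apply Nat.Div0.div_lt_upper_bound. nia.
Qed.

Lemma div_small_add (a j q : nat) : 1 <= q -> a < q -> (a + j) / q <= j / q + 1.
Proof.
  intros Hq Ha. pose proof (div_add_le a j q Hq). rewrite (Nat.div_small a q) in H by lia. lia.
Qed.

Lemma tail_bound Q k p a : Qgood Q -> 1 <= k -> p <= Q k -> a <= Q (k + 1) - 1 ->
  (tent (QL Q k) ((a - p) / Q k) <= Z.of_nat ((Q (k + 1) - 1 - a) / Q k + 1)%nat)%Z.
Proof.
  intros HG Hk Hp Ha. pose proof (blockfact Q k HG Hk) as BF.
  pose proof (proj1 HG k Hk) as Hq.
  pose proof (tent_tail (QL Q k) ((a - p) / Q k)).
  set (L := QL Q k) in *. set (q := Q k) in *. set (u := (a - p) / q) in *.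
  assert (2 * L - u <= (Q (k + 1) - 1 - a) / q + 1); [|lia].
  destruct (Nat.le_gt_cases (2 * L) (u + 1)). lia.
  assert (2 * L - u - 1 <= (Q (k + 1) - 1 - a) / q); [|lia].
  apply Nat.div_le_lower_bound. lia.
  pose proof (Nat.div_mod (a - p) q ltac:(lia)). pose proof (Nat.mod_upper_bound (a - p) q ltac:(lia)).
  fold u in H1. nia.
Qed.

Lemma C_after Q y k p b a j : Qgood Q -> GP Q y -> 1 <= k -> p <= Q k ->
  (forall n, Q k <= n <= Q (k + 1) - 1 -> yat y n = fblk Q p k n) ->
  Q k <= b <= Q (k + 1) - 1 -> a < Q k -> b <= a + j ->
  (0 <= Csum y b <= Z.of_nat (Nat.min (QL Q k) (j / Q k + 1)))%Z.
Proof.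
  intros HG HP Hk Hp Hf Hb Ha Hbj. pose proof (proj1 HG k Hk) as Hq.
  rewrite (Csum_block Q y k p b HG HP Hk Hp Hf) by lia.
  pose proof (tent_bounds (QL Q k) ((b - p) / Q k)) as [T1 T2].
  assert ((b - p) / Q k <= j / Q k + 1).
  { eapply Nat.le_trans. apply Nat.Div0.div_le_mono. instantiate (1 := a + j). lia.
    apply div_small_add; lia. }
  lia.
Qed.

Lemma dC_bound Q y a j : Qgood Q -> GP Q y -> exists k, 1 <= k /\
  (Z.abs (Csum y (a + j) - Csum y a) <= Z.of_nat (Nat.min (QL Q k) (j / Q k + 1)))%Z.
Proof.
  intros HG HP.
  destruct (Nat.lt_ge_cases (a + j) (Q 1)).
  - exists 1. rewrite !(zero_start Q y HP) by lia. lia.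
  - destruct (Nat.lt_ge_cases a (Q 1)).
    + destruct (locate Q (a + j) HG H) as [k' [Hk' Hb]].
      destruct (proj2 HP k' Hk') as [p' [Hp' Hf']].
      exists k'. rewrite (zero_start Q y HP a) by lia.
      pose proof (Qmono Q 1 k' HG ltac:(lia) Hk').
      pose proof (C_after Q y k' p' (a + j) a j HG HP Hk' Hp' Hf' Hb ltac:(lia) ltac:(lia)). lia.
    + destruct (locate Q a HG H0) as [k [Hk Ha]].
      destruct (proj2 HP k Hk) as [p [Hp Hf]]. pose proof (proj1 HG k Hk) as Hq.
      destruct (Nat.le_gt_cases (a + j) (Q (k + 1) - 1)).
      * exists k. rewrite !(Csum_block Q y k p _ HG HP Hk Hp Hf) by lia.
        pose proof (tent_bounds (QL Q k) ((a + j - p) / Q k)).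
        pose proof (tent_bounds (QL Q k) ((a - p) / Q k)).
        assert (Hu : (a - p) / Q k <= (a + j - p) / Q k) by (apply Nat.Div0.div_le_mono; lia).
        pose proof (tent_lip (QL Q k) _ _ Hu).
        assert ((a + j - p) / Q k <= (a - p) / Q k + j / Q k + 1).
        { eapply Nat.le_trans. apply Nat.Div0.div_le_mono. instantiate (1 := (a - p) + j). lia.
          apply div_add_le. lia. }
        lia.
      * destruct (locate Q (a + j) HG H) as [k' [Hk' Hb]].
        destruct (proj2 HP k' Hk') as [p' [Hp' Hf']].
        assert (k + 1 <= k').
        { destruct (Nat.le_gt_cases (k + 1) k'). auto.
          pose proof (Qmono Q (k' + 1) (k + 1) HG ltac:(lia) ltac:(lia)). lia. }
        pose proof (Qmono Q (k + 1) k' HG ltac:(lia) H2).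
        pose proof (C_after Q y k' p' (a + j) a j HG HP Hk' Hp' Hf' Hb ltac:(lia) ltac:(lia)).
        rewrite (Csum_block Q y k p a HG HP Hk Hp Hf) by lia.
        pose proof (tent_bounds (QL Q k) ((a - p) / Q k)).
        pose proof (tail_bound Q k p a HG Hk Hp ltac:(lia)).
        assert ((Q (k + 1) - 1 - a) / Q k <= j / Q k) by (apply Nat.Div0.div_le_mono; lia).
        destruct (Nat.le_ge_cases (Nat.min (QL Q k) (j / Q k + 1)) (Nat.min (QL Q k') (j / Q k' + 1))).
        -- exists k'. split. auto. lia.
        -- exists k. split. auto. lia.
Qed.

End M5.
Import M5.

Module M6.
Import ListNotations.
Open Scope bool_scope.
Open Scope Z_scope.

Definition sgnZ (L : nat) (j : Z) : Z :=
  if (1 <=? j) && (j <=? Z.of_nat L) then 1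
  else if (Z.of_nat L <? j) && (j <=? 2 * Z.of_nat L) then -1 else 0.

Definition phiZ (q L : nat) (e : Z) : Z :=
  if (e mod Z.of_nat q =? 0) then sgnZ L (e / Z.of_nat q) else 0.

Ltac zdestr := repeat match goal with
  | |- context [(?a <=? ?b)%Z] => destruct (Z.leb_spec a b)
  | |- context [(?a <? ?b)%Z] => destruct (Z.ltb_spec a b)
  | |- context [(?a =? ?b)%Z] => destruct (Z.eqb_spec a b)
  | |- context [(?a <=? ?b)%nat] => destruct (Nat.leb_spec a b)
  | |- context [(?a <? ?b)%nat] => destruct (Nat.ltb_spec a b)
  | |- context [(?a =? ?b)%nat] => destruct (Nat.eqb_spec a b)
  | |- context [(?a && ?b)%bool] => progress cbn [andb]
  end.

Lemma shiftR_phi (q L p b : nat) : (1 <= q)%nat ->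
  shiftR p (sword q L) b = phiZ q L (Z.of_nat b - Z.of_nat p).
Proof.
  intros Hq. unfold shiftR, phiZ. destruct (Nat.leb_spec b p).
  - assert ((Z.of_nat b - Z.of_nat p) / Z.of_nat q <= 0).
    { apply Z.div_le_upper_bound; lia. }
    unfold sgnZ. zdestr; lia.
  - unfold sword. rewrite <- Nat2Z.inj_sub by lia.
    rewrite <- Nat2Z.inj_mod, <- Nat2Z.inj_div.
    set (e := (b - p)%nat). zdestr; try lia; unfold sgnZ; zdestr; lia.
Qed.

Definition clampN (N : nat) (x : Z) : nat := Z.to_nat (Z.min x (Z.of_nat N)).

Definition pat5 (r q d1 d2 d3 : nat) (s : nat) : Z :=
  let t := Z.of_nat s - Z.of_nat r in
  if (0 <=? t) && (t mod Z.of_nat q =? 0) then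
    let i := t / Z.of_nat q in
    if (Z.of_nat d1 <=? i) && (i <? Z.of_nat d2) then 1
    else if (Z.of_nat d2 <=? i) && (i <? Z.of_nat d3) then -1 else 0
  else 0.

Definition code5 (q L p a N : nat) : list nat :=
  let r := ((Z.of_nat p - Z.of_nat a) mod Z.of_nat q) in
  let j0 := - ((Z.of_nat p - Z.of_nat a) / Z.of_nat q) in
  [Nat.min (Z.to_nat r) N; Nat.min q N; clampN N (1 - j0);
   clampN N (Z.of_nat L + 1 - j0); clampN N (2 * Z.of_nat L + 1 - j0)].

Definition patl (l : list nat) (s : nat) : Z :=
  match l with [r; q; d1; d2; d3] => pat5 r q d1 d2 d3 s | _ => 0 end.

Lemma code5_bound q L p a N : (1 <= N)%nat -> forall x, In x (code5 q L p a N) -> (x <= N)%nat.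
Proof.
  intros HN x Hx. unfold code5, clampN in Hx. simpl in Hx. intuition lia.
Qed.

Lemma pat_correct q L p a N s : (1 <= q)%nat -> (s < N)%nat ->
  patl (code5 q L p a N) s = phiZ q L (Z.of_nat a + Z.of_nat s - Z.of_nat p).
Proof.
  intros Hq Hs. unfold patl, code5, pat5, phiZ, clampN.
  set (Zq := Z.of_nat q).
  assert (HZq : 0 < Zq) by (unfold Zq; lia).
  pose proof (Z.div_mod (Z.of_nat p - Z.of_nat a) Zq ltac:(lia)) as D.
  pose proof (Z.mod_pos_bound (Z.of_nat p - Z.of_nat a) Zq HZq) as Rb.
  set (r := (Z.of_nat p - Z.of_nat a) mod Zq) in *.
  set (d := (Z.of_nat p - Z.of_nat a) / Zq) in *.
  assert (He : Z.of_nat a + Z.of_nat s - Z.of_nat p = (Z.of_nat s - r) + (- d) * Zq) by lia.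
  rewrite He. rewrite Z.mod_add by lia. rewrite Z.div_add by lia.
  rewrite Nat2Z.inj_min. rewrite Z2Nat.id by lia.
  destruct (Z.ltb_spec (Z.of_nat s) r).
  -
    assert ((Z.of_nat s - r) mod Zq <> 0).
    { intros E. pose proof (Z.div_mod (Z.of_nat s - r) Zq ltac:(lia)). rewrite E in H0. destruct (Z.le_gt_cases 0 ((Z.of_nat s - r) / Zq)); nia. }
    replace (0 <=? Z.of_nat s - Z.min r (Z.of_nat N)) with false by (symmetry; apply Z.leb_gt; lia).
    destruct (Z.eqb_spec ((Z.of_nat s - r) mod Zq) 0); [contradiction|]. reflexivity.
  - replace (Z.min r (Z.of_nat N)) with r by lia.
    set (t := Z.of_nat s - r).
    assert (Ht : 0 <= t < Z.of_nat N) by (unfold t; lia).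
    rewrite Nat2Z.inj_min. fold Zq.
    assert (KEY : (t mod Z.min Zq (Z.of_nat N) = 0 <-> t mod Zq = 0) /\
                  (t mod Zq = 0 -> t / Z.min Zq (Z.of_nat N) = t / Zq)).
    { destruct (Z.le_ge_cases Zq (Z.of_nat N)).
      - rewrite Z.min_l by lia. tauto.
      - rewrite Z.min_r by lia. rewrite (Z.mod_small t Zq) by lia.
        destruct (Z.eq_dec t 0). subst t. rewrite e. rewrite !Zmod_0_l, !Zdiv_0_l. tauto.
        rewrite (Z.mod_small t (Z.of_nat N)) by lia. split. tauto. tauto. }
    destruct KEY as [K1 K2].
    assert (Hi : 0 <= t / Zq <= t) by (split; [apply Z.div_pos | apply Z.div_le_upper_bound]; nia).
    replace (0 <=? t) with true by (symmetry; apply Z.leb_le; lia). cbn [andb].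
    destruct (Z.eqb_spec (t mod Z.min Zq (Z.of_nat N)) 0);
    destruct (Z.eqb_spec (t mod Zq) 0); try tauto.
    + rewrite (K2 e0). unfold sgnZ. set (i := t / Zq) in *. zdestr; lia.
Qed.

End M6.
Import M6.

Module M7.
Import ListNotations.
Open Scope nat_scope.

Fixpoint dec (l : list nat) (s : nat) : Z :=
  match l with
  | r :: q :: d1 :: d2 :: d3 :: rest => (pat5 r q d1 d2 d3 s + dec rest s)%Z
  | _ => 0%Z
  end.

Fixpoint sumL (f : nat -> Z) (l : list nat) : Z :=
  match l with [] => 0%Z | k :: l' => (f k + sumL f l')%Z end.

Lemma dec_flat (g : nat -> list nat) (f : nat -> Z) (l : list nat) s :
  (forall k, In k l -> exists r q d1 d2 d3, g k = [r; q; d1; d2; d3] /\ f k = pat5 r q d1 d2 d3 s) ->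
  dec (flat_map g l) s = sumL f l.
Proof.
  induction l; intros H. reflexivity.
  destruct (H a (or_introl eq_refl)) as [r [q [d1 [d2 [d3 [E1 E2]]]]]].
  simpl. rewrite E1. simpl. rewrite IHl. rewrite E2. reflexivity.
  intros k Hk. apply H. right; auto.
Qed.

Lemma sum_single (f : nat -> Z) (kst a n : nat) :
  (forall k, a <= k < a + n -> k <> kst -> f k = 0%Z) ->
  a <= kst < a + n -> sumL f (seq a n) = f kst.
Proof.
  revert a. induction n; intros a H Hk. lia. simpl.
  destruct (Nat.eq_dec a kst).
  - subst. assert (sumL f (seq (S kst) n) = 0%Z).
    { clear IHn Hk. assert (forall b, kst < b -> (forall k, b <= k < b + n -> f k = 0%Z) -> sumL f (seq b n) = 0%Z).
      { clear H. induction n; intros b Hb Hz. reflexivity. simpl. rewrite Hz by lia.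
        rewrite IHn with (b := S b); try lia. intros; apply Hz; lia. }
      apply H0. lia. intros k Hk. apply H; lia. }
    lia.
  - rewrite H by lia. rewrite IHn. lia. intros; apply H; lia. lia.
Qed.

Lemma sum_zero (f : nat -> Z) (a n : nat) :
  (forall k, a <= k < a + n -> f k = 0%Z) -> sumL f (seq a n) = 0%Z.
Proof.
  revert a. induction n; intros a H. reflexivity. simpl. rewrite H by lia.
  rewrite IHn. lia. intros; apply H; lia.
Qed.

Lemma fin_choice (P : nat -> nat -> Prop) : (forall k, exists p, P k p) ->
  forall n k0, exists f : nat -> nat, forall k, k0 <= k < k0 + n -> P k (f k).
Proof.
  intros H n. induction n; intros k0.
  - exists (fun _ => 0). intros; lia.
  - destruct (IHn k0) as [f Hf]. destruct (H (k0 + n)) as [p Hp].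
    exists (fun k => if k =? k0 + n then p else f k). intros k Hk.
    destruct (Nat.eqb_spec k (k0 + n)). subst; auto. apply Hf; lia.
Qed.

Lemma block_unique Q k k' b : Qgood Q -> 1 <= k -> 1 <= k' ->
  Q k <= b <= Q (k + 1) - 1 -> Q k' <= b <= Q (k' + 1) - 1 -> k = k'.
Proof.
  intros HG Hk Hk' H1 H2. destruct (Nat.lt_total k k') as [Hl|[Hl|Hl]]; auto.
  - pose proof (Qmono Q (k + 1) k' HG ltac:(lia) ltac:(lia)). pose proof (proj1 HG (k+1) ltac:(lia)). lia.
  - pose proof (Qmono Q (k' + 1) k HG ltac:(lia) ltac:(lia)). pose proof (proj1 HG (k'+1) ltac:(lia)). lia.
Qed.

Lemma Qdouble Q k t : Qgood Q -> 1 <= k -> 2 ^ t * Q k <= Q (k + t).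
Proof.
  intros HG Hk. induction t. replace (k + 0) with k by lia. simpl. lia.
  pose proof (proj2 HG (k + t) ltac:(lia)). rewrite Nat.pow_succ_r'.
  replace (k + S t) with (k + t + 1) by lia. nia.
Qed.

Lemma window Q y a N : Qgood Q -> GP Q y -> 1 <= a -> 1 <= N ->
  exists l, length l = 5 * (Nat.log2 N + 2) /\ (forall x, In x l -> x <= N) /\
    forall s, s < N -> yat y (a + s) = dec l s.
Proof.
  intros HG HP Ha HN. set (Bk := Nat.log2 N + 2).
  assert (Hk0 : exists k0, 1 <= k0 /\ a < Q (k0 + 1) /\ (k0 = 1 \/ Q k0 <= a)).
  { destruct (Nat.lt_ge_cases a (Q 1)).
    - exists 1. pose proof (Qstrict Q 1 2 HG ltac:(lia) ltac:(lia)). simpl. repeat split; auto; lia.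
    - destruct (locate Q a HG H) as [k [Hk Hb]]. exists k. repeat split; auto; lia. }
  destruct Hk0 as [k0 [Hk0 [Hak0 Hk0']]].
  destruct (fin_choice (fun k p => 1 <= k -> p <= Q k /\
     forall n, Q k <= n <= Q (k + 1) - 1 -> yat y n = fblk Q p k n)) with (n := Bk) (k0 := k0) as [pk Hpk].
  { intros k. destruct (Nat.le_gt_cases 1 k). destruct (proj2 HP k H) as [p Hp]. exists p; auto.
    exists 0. intros; lia. }
  exists (flat_map (fun k => code5 (Q k) (QL Q k) (pk k) a N) (seq k0 Bk)).
  split; [|split].
  - assert (forall l, length (flat_map (fun k => code5 (Q k) (QL Q k) (pk k) a N) l) = 5 * length l).
    { induction l; simpl. auto. rewrite IHl. lia. }
    rewrite H, length_seq. reflexivity.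
  - intros x Hx. apply in_flat_map in Hx. destruct Hx as [k [_ Hx]].
    eapply code5_bound; eauto.
  - intros s Hs.
    rewrite (dec_flat _ (fun k => fblk Q (pk k) k (a + s))).
    2:{ intros k Hk. apply in_seq in Hk. eexists _, _, _, _, _. split. reflexivity.
        pose proof (proj1 HG k ltac:(lia)).
        unfold fblk. rewrite shiftR_phi by lia.
        change (pat5 _ _ _ _ _ s) with (patl (code5 (Q k) (QL Q k) (pk k) a N) s).
        rewrite pat_correct by lia. f_equal. lia. }
    assert (Hend : a + N <= Q (k0 + Bk)).
    { pose proof (Qdouble Q (k0 + 1) (Nat.log2 N + 1) HG ltac:(lia)).
      replace (k0 + 1 + (Nat.log2 N + 1)) with (k0 + Bk) in H by (unfold Bk; lia).
      pose proof (Nat.log2_spec N ltac:(lia)) as [_ HL].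
      replace (S (Nat.log2 N)) with (Nat.log2 N + 1) in HL by lia. nia. }
    destruct (Nat.lt_ge_cases (a + s) (Q 1)).
    + rewrite (proj1 HP) by lia. symmetry. apply sum_zero. intros k Hk.
      destruct (Z.eq_dec (fblk Q (pk k) k (a + s)) 0); auto.
      destruct (Hpk k ltac:(lia) ltac:(lia)) as [Hp _].
      pose proof (fblk_support Q (pk k) k (a + s) HG ltac:(lia) Hp n).
      pose proof (Qmono Q 1 k HG ltac:(lia) ltac:(lia)). lia.
    + destruct (locate Q (a + s) HG H) as [ka [Hka Hb]].
      assert (Hr : k0 <= ka < k0 + Bk).
      { split.
        - destruct Hk0' as [->|Hq]. lia.
          destruct (Nat.le_gt_cases k0 ka); auto.
          pose proof (Qmono Q (ka + 1) k0 HG ltac:(lia) ltac:(lia)). lia.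
        - destruct (Nat.lt_ge_cases ka (k0 + Bk)); auto.
          pose proof (Qmono Q (k0 + Bk) ka HG ltac:(lia) ltac:(lia)). lia. }
      destruct (Hpk ka Hr ltac:(lia)) as [Hp Hf].
      rewrite (sum_single _ ka) by (auto; intros k Hk Hne;
        destruct (Z.eq_dec (fblk Q (pk k) k (a + s)) 0); auto;
        destruct (Hpk k Hk ltac:(lia)) as [Hp' _];
        pose proof (fblk_support Q (pk k) k (a + s) HG ltac:(lia) Hp' n);
        exfalso; apply Hne; eapply block_unique; eauto; lia).
      apply Hf. lia.
Qed.

End M7.
Import M7.

Module M8.
Import ListNotations.
Open Scope nat_scope.

Lemma q_ge2 (q : nat -> nat) : 2 <= q 1 -> (forall k, 1 <= k -> q k < q (k + 1)) ->
  forall k, 1 <= k -> 2 <= q k.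
Proof.
  intros H1 H2 k Hk. induction Hk. auto. specialize (H2 m Hk).
  replace (S m) with (m + 1) by lia. lia.
Qed.

Lemma Qgood_qi (q : nat -> nat) i : 2 <= q 1 -> (forall k, 1 <= k -> q k < q (k + 1)) ->
  (forall k, 1 <= k -> q k ^ 4 + 3 * q k < q (k + 1)) -> i < 4 -> Qgood (qi q i).
Proof.
  intros H1 H2 H3 Hi. pose proof (q_ge2 q H1 H2) as G.
  assert (A : forall m, 1 <= m -> 3 * q m + 3 <= q (m + 1) /\ 3 * q m + 1 <= q (m + 1) - 1).
  { intros m Hm. specialize (H3 m Hm). specialize (G m Hm).
    assert (q m ^ 4 >= 3). { replace (q m ^ 4) with (q m * q m * q m * q m) by (simpl; lia). nia. }
    lia. }
  split; intros k Hk.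
  - destruct i as [|[|[|[|]]]]; unfold qi; try lia.
    + pose proof (G (2 * k) ltac:(lia)); lia.
    + pose proof (G (2 * k + 1) ltac:(lia)); lia.
    + pose proof (G (2 * k) ltac:(lia)); lia.
    + pose proof (G (2 * k + 1) ltac:(lia)); lia.
  - destruct i as [|[|[|[|]]]]; unfold qi; try lia.
    + replace (2 * (k + 1)) with (2 * k + 1 + 1) by lia.
      pose proof (A (2 * k) ltac:(lia)). pose proof (A (2 * k + 1) ltac:(lia)). lia.
    + replace (2 * (k + 1) + 1) with (2 * k + 1 + 1 + 1) by lia.
      pose proof (A (2 * k + 1) ltac:(lia)). pose proof (A (2 * k + 1 + 1) ltac:(lia)). lia.
    + replace (2 * (k + 1)) with (2 * k + 1 + 1) by lia.
      pose proof (A (2 * k) ltac:(lia)). pose proof (A (2 * k + 1) ltac:(lia)). lia.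
    + replace (2 * (k + 1) + 1) with (2 * k + 1 + 1 + 1) by lia.
      pose proof (A (2 * k + 1) ltac:(lia)). pose proof (A (2 * k + 1 + 1) ltac:(lia)). lia.
Qed.

Lemma Pset_GP q i y : Pset q i y -> GP (qi q i) y.
Proof.
  intros [_ [H1 H2]]. split; [exact H1|exact H2].
Qed.

Fixpoint LM (Q : nat -> nat) (K : nat) : nat :=
  match K with O => 0 | S K' => Nat.max (LM Q K') (QL Q K') end.

Lemma LM_ge Q K k : k < K -> QL Q k <= LM Q K.
Proof. induction K; intros H; simpl. lia. destruct (Nat.eq_dec k K). subst; lia.
  specialize (IHK ltac:(lia)). lia. Qed.

Lemma min_to_max Q K k j n : Qgood Q -> 1 <= K -> 1 <= k -> j <= n ->
  Nat.min (QL Q k) (j / Q k + 1) <= Nat.max (LM Q K) (n / Q K + 1).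
Proof.
  intros HG HK Hk Hj. destruct (Nat.lt_ge_cases k K).
  - pose proof (LM_ge Q K k H). lia.
  - pose proof (Qmono Q K k HG HK H). pose proof (proj1 HG K HK).
    assert (j / Q k <= n / Q K).
    { eapply Nat.le_trans. apply Nat.Div0.div_le_mono. exact Hj.
      apply Nat.div_le_compat_l. lia. }
    lia.
Qed.

Lemma Csum_shift (u y : seqN) (m j : nat) : (forall k, k < j -> u k = y (k + m)) ->
  Csum u j = (Csum y (m + j) - Csum y m)%Z.
Proof.
  induction j; intros H. simpl. rewrite Nat.add_0_r. lia.
  simpl. rewrite IHj by (intros; apply H; lia). rewrite H by lia.
  replace (m + S j) with (S (m + j)) by lia. simpl. replace (j + m) with (m + j) by lia. lia.
Qed.

Lemma point_code q i (x : Pt) n M K : Qgood (qi q i) -> Xi q i x -> 1 <= n + M -> 1 <= K ->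
  (exists l, length l = 5 * (Nat.log2 (n + M) + 2) /\ (forall z, In z l -> z <= n + M) /\
     forall k, k < n + M -> fst x k = dec l k) /\
  (forall j, j <= n -> (Z.abs (Csum (fst x) j) <= Z.of_nat (Nat.max (LM (qi q i) K) (n / qi q i K + 1)))%Z).
Proof.
  intros HG [_ Hcl] HN HK.
  destruct (Hcl ((/3)^(n + M))%R (third_pow_pos _)) as [p [m [HP [_ Hd]]]].
  assert (Hag : forall k, k < n + M -> fst x k = fst p (k + m)).
  { intros k Hk. rewrite <- iter_T_fst. eapply dN_agree; [|exact Hk].
    unfold dPt in Hd. eapply Rle_lt_trans; [apply Rmax_l|exact Hd]. }
  pose proof (Pset_GP q i _ HP) as HGP.
  split.
  - destruct (window (qi q i) (fst p) (m + 1) (n + M) HG HGP ltac:(lia) HN) as [l [L1 [L2 L3]]].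
    exists l. split; auto. split; auto. intros k Hk. rewrite Hag by auto. rewrite <- L3 by auto.
    unfold yat. f_equal. lia.
  - intros j Hj. rewrite (Csum_shift _ (fst p) m j) by (intros; apply Hag; lia).
    destruct (dC_bound (qi q i) (fst p) m j HG HGP) as [k [Hk Hb]].
    pose proof (min_to_max (qi q i) K k j n HG HK Hk Hj). lia.
Qed.

End M8.
Import M8.

Module M9.
Import ListNotations.
Open Scope nat_scope.

Lemma pigeon {S C : Type} (E : list S) (codes : list C) (Rel : S -> C -> Prop) :
  NoDup E -> (forall x, In x E -> exists c, In c codes /\ Rel x c) ->
  (forall x y c, In x E -> In y E -> Rel x c -> Rel y c -> x = y) ->
  length E <= length codes.
Proof.
  intros HN Hex Hinj.
  assert (exists L, Forall2 (fun x c => In c codes /\ Rel x c) E L).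
  { clear HN Hinj. induction E. exists []. constructor.
    destruct (Hex a (or_introl eq_refl)) as [c Hc].
    destruct IHE as [L HL]. intros; apply Hex; right; auto. exists (c :: L). constructor; auto. }
  destruct H as [L HL].
  assert (length E = length L) by (eapply Forall2_length; eauto).
  rewrite H. apply NoDup_incl_length.
  - clear H. induction HL. constructor. constructor.
    + intros Hin. inversion HN; subst.
      assert (exists z, In z l /\ Rel z y).
      { clear -HL Hin. induction HL. destruct Hin. destruct Hin as [->|Hin].
        exists x. split; [left|]; tauto. destruct (IHHL Hin) as [z [Hz Hz']]. exists z; split; [right|]; auto. }
      destruct H0 as [z [Hz Hz']]. assert (z = x). { eapply Hinj; eauto. right; auto. left; auto. apply H. }
      subst. contradiction.
    + apply IHHL. inversion HN; auto. intros; apply Hex; right; auto.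
      intros; eapply Hinj; eauto; right; auto.
  - intros c Hc. clear -HL Hc. induction HL. destruct Hc. destruct Hc as [->|Hc]. apply H. auto.
Qed.

Fixpoint lists (b A : nat) : list (list nat) :=
  match A with
  | O => [[]]
  | S A' => flat_map (fun l => map (fun x => x :: l) (seq 0 b)) (lists b A')
  end.

Lemma lists_length b A : length (lists b A) = b ^ A.
Proof.
  induction A; simpl. auto.
  assert (forall L, length (flat_map (fun l => map (fun x => x :: l) (seq 0 b)) L) = b * length L).
  { induction L; simpl. lia. rewrite length_app, length_map, length_seq, IHL. lia. }
  rewrite H, IHA. reflexivity.
Qed.

Lemma lists_in b A l : length l = A -> (forall x, In x l -> x < b) -> In l (lists b A).
Proof.
  revert l. induction A; intros l Hl Hb.
  - destruct l; simpl in *; try lia. auto.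
  - destruct l as [|x l]; simpl in Hl; try lia. simpl. apply in_flat_map.
    exists l. split. apply IHA. lia. intros; apply Hb; right; auto.
    apply (in_map (fun x0 => x0 :: l)). apply in_seq. assert (x < b) by (apply Hb; left; auto). lia.
Qed.

Lemma Csum_ext (u v : seqN) j : (forall k, k < j -> u k = v k) -> Csum u j = Csum v j.
Proof. induction j; intros H; simpl; auto. rewrite IHj, H by (auto; lia). reflexivity. Qed.

Lemma third_pow_inv (M : nat) : ((/3)^M <= / (INR M + 1))%R.
Proof.
  induction M. simpl. lra.
  rewrite S_INR. simpl. pose proof (pos_INR M).
  apply Rle_trans with (/3 * / (INR M + 1))%R. apply Rmult_le_compat_l; lra.
  rewrite <- Rinv_mult. apply Rinv_le_contravar; nra.
Qed.

Definition Rpt (N n B M : nat) (x : Pt) (yl zl : list nat) : Prop :=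
  (forall k, k < N -> fst x k = dec yl k) /\
  (forall m : Z, (Z.abs m <= Z.of_nat (B + M))%Z ->
      snd x m = (Z.of_nat (nth (Z.to_nat (m + Z.of_nat (B + M))) zl 0%nat) - 1)%Z) /\
  (forall j, j <= n -> (Z.abs (Csum (fst x) j) <= Z.of_nat B)%Z).

Lemma Rpt_close N n B M x x' yl zl j : N = n + M -> Rpt N n B M x yl zl -> Rpt N n B M x' yl zl ->
  j < n -> (dPt (Nat.iter j Tmap x) (Nat.iter j Tmap x') <= (/3)^(S M))%R.
Proof.
  intros HN [A1 [A2 A3]] [B1 [B2 B3]] Hj. unfold dPt. apply Rmax_lub.
  - apply dN_upper. intros k Hk. rewrite !iter_T_fst. rewrite A1, B1 by lia. reflexivity.
  - apply dZ_upper. intros m Hm. rewrite !iter_T_snd.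
    assert (Csum (fst x) j = Csum (fst x') j) by (apply Csum_ext; intros; rewrite A1, B1 by lia; auto).
    rewrite <- H. specialize (A3 j ltac:(lia)).
    rewrite A2, B2 by lia. reflexivity.
Qed.

End M9.
Import M9.

Module M10.
Import ListNotations.
Open Scope nat_scope.

Lemma point_R q i x n M K B : Qgood (qi q i) -> Xi q i x -> 1 <= n + M -> 1 <= K ->
  Nat.max (LM (qi q i) K) (n / qi q i K + 1) <= B ->
  exists yl zl, length yl = 5 * (Nat.log2 (n + M) + 2) /\ (forall z, In z yl -> z < S (n + M)) /\
    length zl = 2 * (B + M) + 1 /\ (forall z, In z zl -> z < 3) /\ Rpt (n + M) n B M x yl zl.
Proof.
  intros HG HX HN HK HB.
  destruct (point_code q i x n M K HG HX HN HK) as [[yl [Y1 [Y2 Y3]]] Hc].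
  destruct HX as [[_ Hsym] _].
  set (BM := B + M).
  set (f := fun t : nat => Z.to_nat (snd x (Z.of_nat t - Z.of_nat BM)%Z + 1)%Z).
  exists yl, (map f (seq 0 (2 * BM + 1))).
  split; auto. split. intros z Hz; specialize (Y2 z Hz); lia.
  split. rewrite length_map, length_seq. reflexivity.
  split. intros z Hz. apply in_map_iff in Hz. destruct Hz as [t [<- _]]. unfold f.
  destruct (Hsym (Z.of_nat t - Z.of_nat BM)%Z) as [E|[E|E]]; rewrite E; simpl; lia.
  split; auto. split.
  - intros m Hm. rewrite nth_indep with (d' := f 0).
    2:{ rewrite length_map, length_seq. lia. }
    rewrite map_nth. rewrite seq_nth by lia. unfold f.
    unfold BM in *. replace (Z.of_nat (0 + Z.to_nat (m + Z.of_nat (B + M))) - Z.of_nat (B + M))%Z with m by lia.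
    destruct (Hsym m) as [E|[E|E]]; rewrite E; simpl; lia.
  - intros j Hj. specialize (Hc j Hj). lia.
Qed.

End M10.
Import M10.

Module M11.
Open Scope R_scope.

Lemma nat_above (r : R) : exists n : nat, r <= INR n.
Proof.
  destruct (archimed r) as [H _]. exists (Z.to_nat (up r)).
  destruct (Z.le_gt_cases 0 (up r)).
  - rewrite INR_IZR_INZ, Z2Nat.id by lia. lra.
  - assert (IZR (up r) <= 0) by (apply IZR_le; lia). pose proof (pos_INR (Z.to_nat (up r))). lra.
Qed.

Lemma exp_le_mono x y : x <= y -> exp x <= exp y.
Proof. intros [H|H]. left; apply exp_increasing; auto. subst; lra. Qed.

Lemma ln_le' x y : 0 < x -> x <= y -> ln x <= ln y.
Proof. intros H [H1|H1]. left; apply ln_increasing; auto. subst; lra. Qed.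

Lemma ln3_le2 : ln 3 <= 2.
Proof.
  assert (3 <= exp 2).
  { replace 2 with (1 + 1) by lra. rewrite exp_plus. pose proof (exp_ineq1 1 ltac:(lra)). nra. }
  rewrite <- (ln_exp 2). apply ln_le'; lra.
Qed.

Lemma ln_sq_small (eps X : R) : 0 < eps -> exp (27 / eps) <= X -> (ln X)^2 <= eps * X.
Proof.
  intros He HX. assert (HX0 : 0 < X) by (pose proof (exp_pos (27/eps)); lra).
  set (l := ln X).
  assert (Hl : 27 / eps <= l). { unfold l. rewrite <- (ln_exp (27/eps)). apply ln_le'. apply exp_pos. auto. }
  assert (Hlp : 0 < l). { assert (0 < 27 / eps) by (apply Rdiv_lt_0_compat; lra). lra. }
  assert (Hc : l ^ 3 <= 27 * X).
  { assert (X = exp (l/3) * exp (l/3) * exp (l/3)). { unfold l. rewrite <- !exp_plus.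
      replace (ln X / 3 + ln X / 3 + ln X / 3) with (ln X) by lra. rewrite exp_ln; auto. }
    pose proof (exp_ineq1 (l/3) ltac:(lra)). rewrite H.
    assert (0 <= l/3) by lra. assert (l / 3 <= exp (l / 3)) by lra.
    assert ((l/3)*(l/3) <= exp (l/3) * exp (l/3)) by (apply Rmult_le_compat; lra).
    assert ((l/3)*(l/3)*(l/3) <= exp (l/3) * exp (l/3) * exp (l/3)) by (apply Rmult_le_compat; nra).
    simpl. nra. }
  assert (eps * l >= 27). { apply Rle_ge. apply (Rmult_le_reg_r (/ eps)). apply Rinv_0_lt_compat; auto.
    replace (eps * l * / eps) with l by (field; lra). lra. }
  simpl in *. nra.
Qed.

Lemma log2_ln (N : nat) : (1 <= N)%nat -> INR (Nat.log2 N) <= 2 * ln (INR N + 1).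
Proof.
  intros HN. pose proof (Nat.log2_spec N ltac:(lia)) as [H _].
  assert (INR (2 ^ Nat.log2 N) <= INR N) by (apply le_INR; auto).
  rewrite pow_INR in H0. replace (INR 2) with 2 in H0 by (simpl; lra).
  assert (ln (2 ^ Nat.log2 N) <= ln (INR N + 1)). { apply ln_le'. apply pow_lt; lra. lra. }
  rewrite ln_pow in H1 by lra. pose proof ln_lt_2. pose proof (pos_INR (Nat.log2 N)). nra.
Qed.

Lemma ln4_le : ln 4 <= 2.
Proof.
  assert (4 <= exp 2).
  { replace 2 with (1 + 1) by lra. rewrite exp_plus. pose proof (exp_ineq1 1 ltac:(lra)). nra. }
  rewrite <- (ln_exp 2). apply ln_le'; lra.
Qed.

Lemma asym (delta : R) (M D : nat) : 0 < delta -> 36 <= INR D * delta ->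
  exists N0, (1 <= N0)%nat /\ forall n, (N0 <= n)%nat ->
   INR (4 * (S (n + M) ^ (5 * (Nat.log2 (n + M) + 2))) ^ 4 * (3 ^ (2 * (n / D + M) + 1)) ^ 4)
     <= exp (delta * INR n).
Proof.
  intros Hd HD.
  assert (HD0 : (1 <= D)%nat). { destruct D. simpl in HD. lra. lia. }
  set (eps := delta / 640).
  assert (Heps : 0 < eps) by (unfold eps; lra).
  set (C := 50 + 16 * INR M).
  destruct (nat_above (exp (27 / eps))) as [n1 Hn1].
  destruct (nat_above (4 * C / delta)) as [n2 Hn2].
  exists (Nat.max (M + 1) (Nat.max n1 (Nat.max n2 1))). split. lia.
  intros n Hn.
  set (N := (n + M)%nat). set (Ly := (5 * (Nat.log2 N + 2))%nat). set (Lz := (2 * (n / D + M) + 1)%nat).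
  set (X := INR (S N)).
  assert (HX : X = INR n + INR M + 1) by (unfold X, N; rewrite S_INR, plus_INR; lra).
  assert (HXp : 1 <= X). { pose proof (pos_INR n); pose proof (pos_INR M); lra. }
  assert (Hcnt : INR (4 * (S N ^ Ly) ^ 4 * (3 ^ Lz) ^ 4) = 4 * (X ^ Ly) ^ 4 * (3 ^ Lz) ^ 4).
  { rewrite !mult_INR, !pow_INR. replace (INR 4) with 4 by (simpl; lra). replace (INR 3) with 3 by (simpl; lra). reflexivity. }
  rewrite Hcnt.
  assert (Hpos : 0 < 4 * (X ^ Ly) ^ 4 * (3 ^ Lz) ^ 4).
  { apply Rmult_lt_0_compat. apply Rmult_lt_0_compat. lra. apply pow_lt, pow_lt; lra. apply pow_lt, pow_lt; lra. }
  rewrite <- (exp_ln _ Hpos). apply exp_le_mono.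
  rewrite ln_mult, ln_mult, !ln_pow; try lra; try (apply pow_lt; lra); try (apply pow_lt, pow_lt; lra).
  set (l := ln X).
  assert (Hl0 : 0 <= l). { unfold l. rewrite <- ln_1. apply ln_le'; lra. }
  assert (HL2 : INR (Nat.log2 N) <= 2 * l).
  { unfold l, X. rewrite S_INR. apply log2_ln. unfold N; lia. }
  assert (HLy : INR Ly = 5 * (INR (Nat.log2 N) + 2)) by (unfold Ly; rewrite mult_INR, plus_INR; simpl; lra).
  assert (HnD : INR (n / D) * INR D <= INR n).
  { rewrite <- mult_INR. apply le_INR. rewrite Nat.mul_comm. apply Nat.Div0.mul_div_le. }
  assert (HLz : INR Lz = 2 * (INR (n / D) + INR M) + 1) by (unfold Lz; rewrite plus_INR, mult_INR, plus_INR; simpl; lra).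
  pose proof ln3_le2. pose proof ln4_le.
  assert (Hln3 : 0 <= ln 3). { rewrite <- ln_1. apply ln_le'; lra. }
  assert (Hsq : l ^ 2 <= eps * X).
  { apply ln_sq_small; auto. rewrite HX. pose proof (pos_INR M).
    assert (INR n1 <= INR n) by (apply le_INR; lia). lra. }
  assert (HnM : INR M + 1 <= INR n). { replace (INR M + 1) with (INR (M + 1)) by (rewrite plus_INR; simpl; lra).
    apply le_INR; lia. }
  assert (Hn2' : INR n2 <= INR n) by (apply le_INR; lia).
  assert (HCn : C <= delta * INR n / 4).
  { assert (4 * C / delta * delta = 4 * C) by (field; lra).
    assert (4 * C / delta <= INR n) by lra. nra. }
  assert (HnDd : 16 * INR (n / D) <= delta * INR n / 2).
  { pose proof (pos_INR (n / D)). pose proof (pos_INR n). nra. }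
  simpl INR. rewrite HLy, HLz. unfold C in HCn. unfold eps in Hsq. simpl in Hsq.
  pose proof (pos_INR (n / D)). pose proof (pos_INR M).
  assert (T1 : 4 * (5 * (INR (Nat.log2 N) + 2)) * l <= 80 * (l * l) + 40).
  { assert (l <= l * l + 1) by nra. nra. }
  assert (T2 : 4 * (2 * (INR (n / D) + INR M) + 1) * ln 3 <= 16 * INR (n / D) + 16 * INR M + 8).
  { nra. }
  assert (T3 : 80 * (l * l) <= delta * INR n / 4).
  { rewrite HX in Hsq. nra. }
  replace (1 + 1 + 1 + 1) with 4 by lra. nra.
  apply Rmult_lt_0_compat. lra. apply pow_lt, pow_lt; lra.
Qed.

End M11.
Import M11.

Import ListNotations.
Import ListNotations.

Theorem mainTheorem9 (tau : nat -> R) (q : nat -> nat)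
  (Htau_pos : forall n : nat, 0 < tau n)
  (Htau_mono : forall m n : nat, (m <= n)%nat -> tau n <= tau m)
  (Htau_lim : Un_cv tau 0)
  (Hq1 : (2 <= q 1%nat)%nat)
  (Hq_incr : forall k : nat, (1 <= k)%nat -> (q k < q (k + 1))%nat)
  (Hq_i : forall k : nat, (1 <= k)%nat ->
            (q k ^ 4 + 3 * q k < q (k + 1))%nat)
  (Hq_ii : forall k : nat, (1 <= k)%nat ->
            tau ((q (k + 1) + 2) / 3)%nat < / (16 * INR (q k))) :
  zero_topological_entropy (Xset q) dSt That.
Proof.
  intros eps delta Heps Hdelta.
  assert (HG : forall i, (i < 4)%nat -> Qgood (qi q i)) by (intros; apply Qgood_qi; auto).
  destruct (nat_above (/ eps)) as [M HM].
  assert (HMe : (/3)^(S M) <= eps).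
  { pose proof (third_pow_inv M). pose proof (third_pow_le (S M) M ltac:(lia)).
    assert (/ (INR M + 1) <= eps).
    { rewrite <- (Rinv_inv eps). apply Rinv_le_contravar. apply Rinv_0_lt_compat; auto. lra. }
    lra. }
  destruct (nat_above (36 / delta)) as [D0 HD0].
  set (D := S D0).
  assert (HD : 36 <= INR D * delta).
  { unfold D. rewrite S_INR. assert (36 / delta * delta = 36) by (field; lra). nra. }
  destruct (asym delta M D Hdelta HD) as [N0a [HN0a HN0]].
  set (K := (2 * D)%nat).
  set (LMall := (LM (qi q 0) K + LM (qi q 1) K + LM (qi q 2) K + LM (qi q 3) K)%nat).
  exists (Nat.max N0a (Nat.max (D * LMall) (2 * D))).
  intros n Hn E [HND [HEX HEsep]].
  set (B := (n / D)%nat).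
  assert (HB : forall i, (i < 4)%nat -> (Nat.max (LM (qi q i) K) (n / qi q i K + 1) <= B)%nat).
  { intros i Hi. unfold B. apply Nat.div_le_lower_bound. unfold D; lia.
    assert (LM (qi q i) K <= LMall)%nat.
    { unfold LMall. destruct i as [|[|[|[|]]]]; lia. }
    pose proof (Qge (qi q i) K (HG i Hi) ltac:(unfold K, D; lia)).
    assert (n / qi q i K <= n / (2 * D))%nat by (apply Nat.div_le_compat_l; unfold K, D in *; lia).
    pose proof (Nat.Div0.mul_div_le n (2 * D)).
    assert (D * LMall <= n)%nat by lia.
    assert (D * LM (qi q i) K <= n)%nat by nia.
    assert (D * (n / qi q i K + 1) <= n)%nat by nia.
    destruct (Nat.max_spec (LM (qi q i) K) (n / qi q i K + 1)) as [[_ ->]|[_ ->]]; lia. }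
  set (N := (n + M)%nat).
  set (Ly := (5 * (Nat.log2 N + 2))%nat).
  set (Lz := (2 * (B + M) + 1)%nat).
  set (Y := lists (S N) Ly). set (Zs := lists 3 Lz).
  set (codes := list_prod (list_prod (seq 0 4) (list_prod (list_prod (list_prod Y Y) Y) Y))
                          (list_prod (list_prod (list_prod Zs Zs) Zs) Zs)).
  set (Rel := fun (s : St) (c : nat * (list nat * list nat * list nat * list nat) *
                                   (list nat * list nat * list nat * list nat)) =>
     match s, c with
     | (p0, p1, p2, p3, i), (i', (y0, y1, y2, y3), (z0, z1, z2, z3)) =>
         i = i' /\ Rpt N n B M p0 y0 z0 /\ Rpt N n B M p1 y1 z1 /\
         Rpt N n B M p2 y2 z2 /\ Rpt N n B M p3 y3 z3
     end).
  assert (Hlen : (length E <= length codes)%nat).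
  { apply (pigeon E codes Rel HND).
    - intros s Hs. specialize (HEX s Hs).
      destruct s as [[[[p0 p1] p2] p3] i]. destruct HEX as [X0 [X1 [X2 [X3 Hi]]]].
      assert (HNpos : (1 <= n + M)%nat) by lia.
      assert (HK : (1 <= K)%nat) by (unfold K, D; lia).
      destruct (point_R q 0 p0 n M K B (HG 0%nat ltac:(lia)) X0 HNpos HK (HB 0%nat ltac:(lia)))
        as [y0 [z0 [A1 [A2 [A3 [A4 A5]]]]]].
      destruct (point_R q 1 p1 n M K B (HG 1%nat ltac:(lia)) X1 HNpos HK (HB 1%nat ltac:(lia)))
        as [y1 [z1 [B1 [B2 [B3 [B4 B5]]]]]].
      destruct (point_R q 2 p2 n M K B (HG 2%nat ltac:(lia)) X2 HNpos HK (HB 2%nat ltac:(lia)))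
        as [y2 [z2 [C1 [C2 [C3 [C4 C5]]]]]].
      destruct (point_R q 3 p3 n M K B (HG 3%nat ltac:(lia)) X3 HNpos HK (HB 3%nat ltac:(lia)))
        as [y3 [z3 [D1 [D2 [D3 [D4 D5]]]]]].
      exists (i, (y0, y1, y2, y3), (z0, z1, z2, z3)). split.
      + unfold codes. repeat apply in_prod; try (apply in_seq; lia);
        apply lists_in; auto.
      + simpl. auto.
    - intros s s' c Hs Hs' R1 R2. destruct (classic (s = s')) as [e|ne]; auto. exfalso.
      destruct (HEsep s s' Hs Hs' ne) as [j [Hj Hd]].
      destruct s as [[[[p0 p1] p2] p3] i]. destruct s' as [[[[p0' p1'] p2'] p3'] i'].
      destruct c as [[ic [[[y0 y1] y2] y3]] [[[z0 z1] z2] z3]].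
      simpl in R1, R2. destruct R1 as [-> [R10 [R11 [R12 R13]]]]. destruct R2 as [-> [R20 [R21 [R22 R23]]]].
      rewrite !iter_That in Hd. unfold dSt in Hd. rewrite Nat.eqb_refl in Hd.
      pose proof (Rpt_close N n B M p0 p0' y0 z0 j eq_refl R10 R20 Hj).
      pose proof (Rpt_close N n B M p1 p1' y1 z1 j eq_refl R11 R21 Hj).
      pose proof (Rpt_close N n B M p2 p2' y2 z2 j eq_refl R12 R22 Hj).
      pose proof (Rpt_close N n B M p3 p3' y3 z3 j eq_refl R13 R23 Hj).
      assert (HH : forall a b c d, a <= eps -> b <= eps -> c <= eps -> d <= eps ->
                Rmax (Rmax (Rmax a b) (Rmax c d)) 0 <= eps) by (intros; repeat apply Rmax_lub; lra).
      cbn iota beta in Hd.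
      assert (eps < eps); [|lra]. eapply Rlt_le_trans; [apply Hd|]. apply HH; lra. }
  assert (Hcodes : length codes = (4 * (S N ^ Ly) ^ 4 * (3 ^ Lz) ^ 4)%nat).
  { unfold codes. rewrite !length_prod, length_seq. unfold Y, Zs. rewrite !lists_length.
    simpl (_ ^ 4)%nat. lia. }
  apply Rle_trans with (INR (length codes)). apply le_INR; auto.
  rewrite Hcodes. apply HN0. lia.
Qed.
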